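(* Let $a,\delta,\beta,h_1,h_2$ be positive real parameters and consider the planar system of ordinary differential equations, defined for $x>0$, $$\frac{dx}{dt} = x(1-x) - \frac{x}{a+x^2}\,y - h_1 x,\qquad \frac{dy}{dt} = \delta y\left(1-\beta\frac{y}{x}\right) - h_2 y.$$ If $h_1\in\,]0,1[$ and $\delta\in\,]0,h_2[$, then the point $(1-h_1,0)$ is an equilibrium of this system and it is a sink.
   Context: This system is a rescaled prey-predator model with Leslie--Gower and simplified Holling IV functional response and constant-effort harvesting; $x$ denotes the prey and $y$ the predator population. An equilibrium point is called a sink if all eigenvalues of the Jacobian matrix of the vector field evaluated at that point have strictly negative real parts. *)

(* Defs.v *)
From HB Require Import structures.
From mathcomp Require Import all_boot all_order all_algebra.
From mathcomp Require Import complex.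
From mathcomp Require Import all_classical all_reals all_analysis.
Set Implicit Arguments. Unset Strict Implicit. Unset Printing Implicit Defensive.
Import Order.TTheory GRing.Theory Num.Theory.
Local Open Scope ring_scope.

Section Model.
Variable R : realType.

Definition f1 (a h1 : R) (x y : R) : R :=
  x * (1 - x) - x / (a + x ^+ 2) * y - h1 * x.

Definition f2 (delta beta h2 : R) (x y : R) : R :=
  delta * y * (1 - beta * y / x) - h2 * y.

Definition jacobian2 (f g : R -> R -> R) (x0 y0 : R) : 'M[R]_2 :=
  \matrix_(i < 2, j < 2)
    let h := if (i : nat) == 0%N then f else g in
    if (j : nat) == 0%N then derive1 (fun x => h x y0) x0
    else derive1 (fun y => h x0 y) y0.

Definition is_sink_matrix (J : 'M[R]_2) : Prop :=
  forall lam : R[i], eigenvalue (map_mx (fun r : R => r%:C%C) J) lam ->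
    complex.Re lam < 0.

Definition is_equilibrium (f g : R -> R -> R) (x0 y0 : R) : Prop :=
  f x0 y0 = 0 /\ g x0 y0 = 0.

Definition is_sink (f g : R -> R -> R) (x0 y0 : R) : Prop :=
  is_sink_matrix (jacobian2 f g x0 y0).
End Model.

(* Main.v *)
Require Import Defs.
From HB Require Import structures.
From mathcomp Require Import all_boot all_order all_algebra.
From mathcomp Require Import complex.
From mathcomp Require Import all_classical all_reals all_analysis.
From mathcomp Require Import lra ring.
Import Order.TTheory GRing.Theory Num.Theory.
Local Open Scope ring_scope.

Lemma char_poly_tr (F : comNzRingType) n (A : 'M[F]_n) :
  char_poly A^T = char_poly A.
Proof.
rewrite /char_poly -det_tr; congr (\det _); apply/matrixP => i j.
by rewrite /char_poly_mx !mxE eq_sym.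
Qed.

Theorem theorem1 (R : realType) (a delta beta h1 h2 : R) :
  0 < a -> 0 < delta -> 0 < beta -> 0 < h1 -> 0 < h2 ->
  h1 < 1 -> delta < h2 ->
  is_equilibrium (f1 a h1) (f2 delta beta h2) (1 - h1) 0 /\
  is_sink (f1 a h1) (f2 delta beta h2) (1 - h1) 0.
Proof.
move=> a0 d0 b0 h10 h20 h11 dh2.
split.
  by split; rewrite /f1 /f2; rewrite ?mulr0 ?mul0r; lra.
set x0 := 1 - h1.
have J00 : derive1 (fun x => f1 a h1 x 0) x0 = - x0.
  have -> : (fun x => f1 a h1 x 0) = (fun x : R => x * (1 - x) - h1 * x).
    by apply/funext => x; rewrite /f1 mulr0 subr0.
  rewrite derive1E derive_val /x0. rewrite /GRing.scale /=. lra.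
have J10 : derive1 (fun x => f2 delta beta h2 x 0) x0 = 0.
  have -> : (fun x => f2 delta beta h2 x 0) = (fun x : R => 0).
    by apply/funext => x; rewrite /f2 !mulr0 !mul0r subrr.
  by rewrite derive1_cst.
have J11 : derive1 (fun y => f2 delta beta h2 x0 y) 0 = delta - h2.
  rewrite /f2 derive1E derive_val. rewrite /GRing.scale /=. rewrite !mulr0 !mul0r. lra.
move=> lam.
rewrite eigenvalue_root_char -char_poly_tr char_poly_trig; last first.
  apply/is_trig_mxP => i j; rewrite !mxE.
  case: i => [[|[|//]] Hi] ; case: j => [[|[|//]] Hj] //= _.
  by rewrite J10.
rewrite big_ord_recr big_ord_recr big_ord0 /= mul1r !mxE /=.
rewrite rootM !root_XsubC => /orP [] /eqP ->.

  rewrite J00 /=. rewrite /x0; lra.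
rewrite J11 /=. lra.
Qed.
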